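(* The cut rule is admissible in ${\sf GWF_{N_2}}$: for every $D\in{\sf Frm_2}$ and all finite multisets $\Gamma,\Gamma',\Delta,\Delta'$ of ${\sf Frm_2}$-formulas, if $\Gamma\Rightarrow D,\Delta$ and $D,\Gamma'\Rightarrow\Delta'$ are derivable in ${\sf GWF_{N_2}}$, then $\Gamma,\Gamma'\Rightarrow\Delta,\Delta'$ is derivable in ${\sf GWF_{N_2}}$.
   Context: Language: countably many atoms $p,q,\dots$, the constant $\bot$, and binary connectives $\wedge,\vee,\rightarrow$ ($\rightarrow$ is strict implication). ${\sf Frm}$ is the set of formulas built from atoms and $\bot$ with $\wedge,\vee,\rightarrow$; $A,B,C,D$ range over ${\sf Frm}$. Let $\supset$ be a new binary symbol (material implication) and ${\sf Frm_1}={\sf Frm}\cup\{A\supset B : A,B\in{\sf Frm}\}$ (no nesting of $\supset$). ${\sf Frm_2}$ is the smallest set containing ${\sf Frm_1}$ and closed under $\wedge$ and $\vee$; $X,Y$ range over ${\sf Frm_2}$. A sequent is $\Gamma\Rightarrow\Delta$ with $\Gamma,\Delta$ finite multisets of ${\sf Frm_2}$-formulas. The calculus ${\sf GWF_{N_2}}$ has initial sequents $(id)$ $p,\Gamma\Rightarrow\Delta,p$ ($p$ an atom) and $(L_\bot)$ $\bot,\Gamma\Rightarrow\Delta$, and rules (premises / conclusion): $(L_\wedge)$ $X,Y,\Gamma\Rightarrow\Delta$ / $X\wedge Y,\Gamma\Rightarrow\Delta$; $(R_\wedge)$ $\Gamma\Rightarrow\Delta,X$ and $\Gamma\Rightarrow\Delta,Y$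 / $\Gamma\Rightarrow\Delta,X\wedge Y$; $(L_\vee)$ $X,\Gamma\Rightarrow\Delta$ and $Y,\Gamma\Rightarrow\Delta$ / $X\vee Y,\Gamma\Rightarrow\Delta$; $(R_\vee)$ $\Gamma\Rightarrow\Delta,X,Y$ / $\Gamma\Rightarrow\Delta,X\vee Y$; $(L_\supset)$ $\Gamma\Rightarrow\Delta,A$ and $B,\Gamma\Rightarrow\Delta$ / $A\supset B,\Gamma\Rightarrow\Delta$; $(R_\supset)$ $A,\Gamma\Rightarrow\Delta,B$ / $\Gamma\Rightarrow\Delta,A\supset B$; $(LR_\rightarrow)$ $C\supset D,A\Rightarrow B$ / $\Gamma,C\rightarrow D\Rightarrow\Delta,A\rightarrow B$; $(R_\rightarrow)$ $A\Rightarrow B$ / $\Gamma\Rightarrow\Delta,A\rightarrow B$. Here $A,B,C,D\in{\sf Frm}$, $X,Y\in{\sf Frm_2}$, and $\Gamma,\Delta$ are arbitrary finite multisets of ${\sf Frm_2}$-formulas. *)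

(* Defs.v *)
From Stdlib Require Import List Permutation Bool.
Import ListNotations.

(* One syntax containing all connectives; Frm and Frm2 are carved out
   by the boolean predicates below. *)
Inductive form : Type :=
| Atom : nat -> form
| Bot  : form
| And  : form -> form -> form
| Or   : form -> form -> form
| Imp  : form -> form -> form   (* strict implication  -> *)
| Mat  : form -> form -> form.  (* material implication  ⊃ *)

Fixpoint isFrm (A : form) : bool :=
  match A with
  | Atom _ | Bot => true
  | And A B | Or A B | Imp A B => isFrm A && isFrm B
  | Mat _ _ => false
  end.

(* X \in Frm2 : smallest set containing Frm1 = Frm ∪ {A ⊃ B | A,B ∈ Frm},
   closed under And and Or. *)
Fixpoint isFrm2 (X : form) : bool :=
  match X with
  | Atom _ | Bot => true
  | And X Y | Or X Y => isFrm2 X && isFrm2 Y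
  | Imp A B | Mat A B => isFrm A && isFrm B
  end.

Definition wfctx (G : list form) : Prop := Forall (fun X => isFrm2 X = true) G.

(* Sequents G => D with G, D finite multisets, represented by lists up to
   permutation: every rule's conclusion may be any permutation of the
   displayed form. *)
Inductive GWF : list form -> list form -> Prop :=
| r_id : forall p G D G' D', wfctx G -> wfctx D ->
    Permutation G' (Atom p :: G) -> Permutation D' (Atom p :: D) ->
    GWF G' D'
| r_Lbot : forall G D G', wfctx G -> wfctx D ->
    Permutation G' (Bot :: G) -> GWF G' D
| r_Land : forall X Y G D G',
    GWF (X :: Y :: G) D -> Permutation G' (And X Y :: G) -> GWF G' D
| r_Rand : forall X Y G D D',
    GWF G (X :: D) -> GWF G (Y :: D) ->
    Permutation D' (And X Y :: D) -> GWF G D'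
| r_Lor : forall X Y G D G',
    GWF (X :: G) D -> GWF (Y :: G) D ->
    Permutation G' (Or X Y :: G) -> GWF G' D
| r_Ror : forall X Y G D D',
    GWF G (X :: Y :: D) -> Permutation D' (Or X Y :: D) -> GWF G D'
| r_Lmat : forall A B G D G', isFrm A = true -> isFrm B = true ->
    GWF G (A :: D) -> GWF (B :: G) D ->
    Permutation G' (Mat A B :: G) -> GWF G' D
| r_Rmat : forall A B G D D', isFrm A = true -> isFrm B = true ->
    GWF (A :: G) (B :: D) ->
    Permutation D' (Mat A B :: D) -> GWF G D'
| r_LRimp : forall A B C D G Dl G' D',
    isFrm A = true -> isFrm B = true -> isFrm C = true -> isFrm D = true ->
    wfctx G -> wfctx Dl ->
    GWF [Mat C D; A] [B] ->
    Permutation G' (Imp C D :: G) -> Permutation D' (Imp A B :: Dl) ->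
    GWF G' D'
| r_Rimp : forall A B G D D',
    isFrm A = true -> isFrm B = true -> wfctx G -> wfctx D ->
    GWF [A] [B] ->
    Permutation D' (Imp A B :: D) -> GWF G D'.

(* Main.v *)
Require Import Defs.
From Stdlib Require Import List Permutation Setoid Morphisms Bool.
Import ListNotations.

Lemma psw_cc {A} (a b : A) r : Permutation (b :: a :: r) (a :: b :: r).
Proof. apply perm_swap. Qed.
Lemma psw_ac {A} (a : A) G r : Permutation (G ++ a :: r) (a :: G ++ r).
Proof. symmetry; apply Permutation_middle. Qed.
Lemma psw_ca {A} (a : A) G r : Permutation (a :: G ++ r) (G ++ a :: r).
Proof. apply Permutation_middle. Qed.
Lemma psw_aa {A} (G H r : list A) : Permutation (H ++ G ++ r) (G ++ H ++ r).
Proof. rewrite !app_assoc. apply Permutation_app_tail, Permutation_app_comm. Qed.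
Lemma pnorm {A} (L R : list A) : Permutation (L ++ []) (R ++ []) -> Permutation L R.
Proof. rewrite !app_nil_r; auto. Qed.

Ltac bring_c a R :=
  match R with
  | a :: _ => idtac
  | ?b :: ?R' => bring_c a R';
       match goal with |- Permutation _ ?RR =>
         match RR with context [b :: a :: ?R''] => rewrite (psw_cc a b R'') end end
  | ?H ++ ?R' => bring_c a R';
       match goal with |- Permutation _ ?RR =>
         match RR with context [H ++ a :: ?R''] => rewrite (psw_ac a H R'') end end
  end.
Ltac bring_a G R :=
  match R with
  | G ++ _ => idtac
  | ?b :: ?R' => bring_a G R';
       match goal with |- Permutation _ ?RR =>
         match RR with context [b :: G ++ ?R''] => rewrite (psw_ca b G R'') end end
  | ?H ++ ?R' => bring_a G R';
       match goal with |- Permutation _ ?RR =>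
         match RR with context [H ++ G ++ ?R''] => rewrite (psw_aa G H R'') end end
  end.
Ltac pcancel :=
  match goal with
  | |- Permutation [] [] => reflexivity
  | |- Permutation (?a :: ?L) ?R => bring_c a R; apply perm_skip; pcancel
  | |- Permutation (?G ++ ?L) ?R => bring_a G R; apply Permutation_app_head; pcancel
  end.
Ltac psolve := apply pnorm; repeat progress (simpl; rewrite <- ?app_assoc); pcancel.


Lemma perm_split {A} (a b : A) l m : Permutation (a::l) (b::m) ->
  (a = b /\ Permutation l m) \/ exists k, Permutation l (b::k) /\ Permutation m (a::k).
Proof.
  intro H. assert (Hi : In a (b::m)) by (eapply Permutation_in; [exact H| left; auto]).
  destruct Hi as [<-|Hi].
  - left. split; auto. eapply Permutation_cons_inv; eauto.
  - right. apply in_split in Hi. destruct Hi as (m1 & m2 & ->). exists (m1 ++ m2). split.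
    + apply (Permutation_cons_inv (a:=a)). rewrite H. psolve.
    + psolve.
Qed.

Lemma wf_perm l m : Permutation l m -> wfctx m -> wfctx l.
Proof. intros H H2. unfold wfctx in *. eapply Permutation_Forall; [symmetry; exact H| exact H2]. Qed.
Lemma wf_app l m : wfctx l -> wfctx m -> wfctx (l ++ m).
Proof. unfold wfctx; intros; apply Forall_app; auto. Qed.
Lemma wf_cons x l : wfctx (x :: l) <-> isFrm2 x = true /\ wfctx l.
Proof. unfold wfctx; apply Forall_cons_iff. Qed.
Lemma wf_nil : wfctx [].
Proof. constructor. Qed.
Lemma Frm_Frm2 A : isFrm A = true -> isFrm2 A = true.
Proof. induction A; simpl; intros H; auto; try discriminate;
  apply andb_prop in H as [H1 H2]; rewrite ?IHA1, ?IHA2, ?H1, ?H2; auto. Qed.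

Ltac wfdes := repeat match goal with
  | H : wfctx (_ :: _) |- _ => apply wf_cons in H; destruct H
  | H : isFrm2 (And _ _) = true |- _ => simpl in H; apply andb_prop in H; destruct H
  | H : isFrm2 (Or _ _) = true |- _ => simpl in H; apply andb_prop in H; destruct H
  | H : wfctx (_ ++ _) |- _ => apply Forall_app in H; destruct H
  | H : isFrm2 (Mat _ _) = true |- _ => simpl in H; apply andb_prop in H; destruct H
  | H : isFrm2 (Imp _ _) = true |- _ => simpl in H; apply andb_prop in H; destruct H
  end.
Ltac wfs0 := repeat first
  [ assumption | reflexivity | apply wf_nil | apply wf_app | apply wf_cons; split
  | apply Frm_Frm2; assumption
  | match goal with |- isFrm2 (?c _ _) = true => simpl; apply andb_true_intro; split end ].
Ltac wfs := wfs0; try match goal with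
  | H : Permutation ?l ?m |- wfctx ?l => solve [apply (wf_perm _ _ H); wfs0]
  | H : Permutation ?m ?l |- wfctx ?l => solve [apply (wf_perm _ _ (Permutation_sym H)); wfs0] end.

Lemma GWF_perm G D : GWF G D -> forall G2 D2, Permutation G G2 -> Permutation D D2 -> GWF G2 D2.
Proof.
  induction 1; intros G2 D2 HG HD.
  - apply (r_id p G D); [eauto|eauto| rewrite <- HG; eauto | rewrite <- HD; eauto].
  - apply (r_Lbot G D2); [eauto| wfs |rewrite <- HG; eauto].
  - apply (r_Land X Y G); [eapply IHGWF; [reflexivity|exact HD] | rewrite <- HG; auto].
  - apply (r_Rand X Y G2 D); [eapply IHGWF1|eapply IHGWF2| rewrite <- HD; auto]; auto.
  - apply (r_Lor X Y G D2); [eapply IHGWF1|eapply IHGWF2| rewrite <- HG; auto]; auto.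
  - apply (r_Ror X Y G2 D); [eapply IHGWF| rewrite <- HD; auto]; auto.
  - apply (r_Lmat A B G D2); [ | | eapply IHGWF1|eapply IHGWF2| rewrite <- HG; auto]; auto.
  - apply (r_Rmat A B G2 D); [ | | eapply IHGWF| rewrite <- HD; auto]; auto.
  - apply (r_LRimp A B C D G Dl); [ .. | rewrite <- HG; eauto | rewrite <- HD; eauto]; eauto.
  - apply (r_Rimp A B G2 D); [ .. | rewrite <- HD; eauto]; eauto. wfs.
Qed.

Lemma GWF_wf G D : GWF G D -> wfctx G /\ wfctx D.
Proof.
  induction 1; repeat match goal with H : _ /\ _ |- _ => destruct H end; wfdes;
    split; wfs; simpl; try (apply andb_true_intro; split); auto.
Qed.

Ltac gp H := eapply GWF_perm; [exact H | psolve | psolve].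

Lemma weak G D : GWF G D -> forall Ls Rs, wfctx Ls -> wfctx Rs -> GWF (Ls ++ G) (Rs ++ D).
Proof.
  induction 1; intros Ls Rs HL HR.
  - apply (r_id p (Ls ++ G) (Rs ++ D)); [wfs|wfs|rewrite H1; psolve|rewrite H2; psolve].
  - apply (r_Lbot (Ls ++ G) (Rs ++ D)); [wfs|wfs|rewrite H1; psolve].
  - apply (r_Land X Y (Ls ++ G)); [ | rewrite H0; psolve].
    specialize (IHGWF Ls Rs HL HR). gp IHGWF.
  - apply (r_Rand X Y _ (Rs ++ D)); [ | | rewrite H1; psolve].
    + specialize (IHGWF1 Ls Rs HL HR). gp IHGWF1.
    + specialize (IHGWF2 Ls Rs HL HR). gp IHGWF2.
  - apply (r_Lor X Y (Ls ++ G)); [ | | rewrite H1; psolve].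
    + specialize (IHGWF1 Ls Rs HL HR). gp IHGWF1.
    + specialize (IHGWF2 Ls Rs HL HR). gp IHGWF2.
  - apply (r_Ror X Y _ (Rs ++ D)); [ | rewrite H0; psolve].
    specialize (IHGWF Ls Rs HL HR). gp IHGWF.
  - apply (r_Lmat A B (Ls ++ G)); [auto|auto| | | rewrite H3; psolve].
    + specialize (IHGWF1 Ls Rs HL HR). gp IHGWF1.
    + specialize (IHGWF2 Ls Rs HL HR). gp IHGWF2.
  - apply (r_Rmat A B _ (Rs ++ D)); [auto|auto| | rewrite H2; psolve].
    specialize (IHGWF Ls Rs HL HR). gp IHGWF.
  - apply (r_LRimp A B C D (Ls ++ G) (Rs ++ Dl)); auto; [wfs|wfs|rewrite H6; psolve|rewrite H7; psolve].
  - apply (r_Rimp A B _ (Rs ++ D)); auto; [wfs|wfs|rewrite H4; psolve].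
Qed.

Definition nonat (F : form) : Prop :=
  match F with And _ _ | Or _ _ | Mat _ _ => True | _ => False end.

Ltac psplit HP Hr := let Hc := fresh "Hc" in
  pose proof (Permutation_trans (Permutation_sym HP) Hr) as Hc;
  apply perm_split in Hc; destruct Hc as [[Heq Hp]|(k & Hk1 & Hk2)].
Ltac wfk Hk := let W := fresh "W" in
  match type of Hk with Permutation ?Gx (?F :: ?k) =>
    assert (W : wfctx (F :: k)) by (apply (wf_perm _ _ (Permutation_sym Hk)); assumption);
    apply wf_cons in W; destruct W as [? ?] end.
Ltac noprinc := match goal with Hn : nonat ?F, Heq : ?F = _ |- _ => subst F; simpl in Hn; contradiction end.

Lemma invL F Ls Rs : nonat F -> wfctx Ls -> wfctx Rs ->
 (forall X Y G D, F = And X Y -> GWF (X::Y::G) D -> GWF (Ls++G) (Rs++D)) ->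
 (forall X Y G D, F = Or X Y -> GWF (X::G) D -> GWF (Y::G) D -> GWF (Ls++G) (Rs++D)) ->
 (forall A B G D, F = Mat A B -> GWF G (A::D) -> GWF (B::G) D -> GWF (Ls++G) (Rs++D)) ->
 forall Gr D, GWF Gr D -> forall G, Permutation Gr (F::G) -> GWF (Ls++G) (Rs++D).
Proof.
  intros Hn HL HR HA HO HM Gr D0 Hd. induction Hd; intros G0 HP.
  - psplit HP H1; [noprinc|]. wfk Hk2.
    apply (r_id p (Ls ++ k) (Rs ++ D)); [wfs|wfs|rewrite Hk1; psolve|rewrite H2; psolve].
  - psplit HP H1; [noprinc|]. wfk Hk2.
    apply (r_Lbot (Ls ++ k) (Rs ++ D)); [wfs|wfs|rewrite Hk1; psolve].
  - psplit HP H.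
    + apply (HA X Y G0 D Heq). eapply GWF_perm; [exact Hd| |reflexivity]. rewrite Hp. reflexivity.
    + assert (I := IHHd (X :: Y :: k) ltac:(rewrite Hk2; psolve)).
      apply (r_Land X Y (Ls ++ k)); [gp I | rewrite Hk1; psolve].
  - assert (I1 := IHHd1 G0 HP). assert (I2 := IHHd2 G0 HP).
    apply (r_Rand X Y _ (Rs ++ D)); [gp I1 | gp I2 | rewrite H; psolve].
  - psplit HP H.
    + apply (HO X Y G0 D Heq).
      * eapply GWF_perm; [exact Hd1| |reflexivity]. rewrite Hp. reflexivity.
      * eapply GWF_perm; [exact Hd2| |reflexivity]. rewrite Hp. reflexivity.
    + assert (I1 := IHHd1 (X :: k) ltac:(rewrite Hk2; psolve)).
      assert (I2 := IHHd2 (Y :: k) ltac:(rewrite Hk2; psolve)).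
      apply (r_Lor X Y (Ls ++ k)); [gp I1 | gp I2 | rewrite Hk1; psolve].
  - assert (I := IHHd G0 HP).
    apply (r_Ror X Y _ (Rs ++ D)); [gp I | rewrite H; psolve].
  - psplit HP H1.
    + apply (HM A B G0 D Heq).
      * eapply GWF_perm; [exact Hd1| |reflexivity]. rewrite Hp. reflexivity.
      * eapply GWF_perm; [exact Hd2| |reflexivity]. rewrite Hp. reflexivity.
    + assert (I1 := IHHd1 k Hk2).
      assert (I2 := IHHd2 (B :: k) ltac:(rewrite Hk2; psolve)).
      apply (r_Lmat A B (Ls ++ k)); [auto|auto|gp I1 | gp I2 | rewrite Hk1; psolve].
  - assert (I := IHHd (A :: G0) ltac:(rewrite HP; psolve)).
    apply (r_Rmat A B _ (Rs ++ D)); [auto|auto|gp I | rewrite H1; psolve].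
  - psplit HP H5; [noprinc|]. wfk Hk2.
    apply (r_LRimp A B C D (Ls ++ k) (Rs ++ Dl)); auto; [wfs|wfs|rewrite Hk1; psolve|rewrite H6; psolve].
  - assert (W : wfctx (F :: G0)) by (apply (wf_perm _ _ (Permutation_sym HP)); assumption).
    apply wf_cons in W; destruct W as [W1 W2].
    apply (r_Rimp A B _ (Rs ++ D)); auto; [wfs|wfs|rewrite H3; psolve].
Qed.

Lemma invR F Ls Rs : nonat F -> wfctx Ls -> wfctx Rs ->
 (forall X Y G D, F = And X Y -> GWF G (X::D) -> GWF G (Y::D) -> GWF (Ls++G) (Rs++D)) ->
 (forall X Y G D, F = Or X Y -> GWF G (X::Y::D) -> GWF (Ls++G) (Rs++D)) ->
 (forall A B G D, F = Mat A B -> GWF (A::G) (B::D) -> GWF (Ls++G) (Rs++D)) ->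
 forall G Dr, GWF G Dr -> forall D, Permutation Dr (F::D) -> GWF (Ls++G) (Rs++D).
Proof.
  intros Hn HL HR HA HO HM G1 Dr Hd. induction Hd; intros D0 HP.
  - psplit HP H2; [noprinc|]. wfk Hk2.
    apply (r_id p (Ls ++ G) (Rs ++ k)); [wfs|wfs|rewrite H1; psolve|rewrite Hk1; psolve].
  - assert (W : wfctx (F :: D0)) by (apply (wf_perm _ _ (Permutation_sym HP)); assumption).
    apply wf_cons in W; destruct W as [W1 W2].
    apply (r_Lbot (Ls ++ G) (Rs ++ D0)); [wfs|wfs|rewrite H1; psolve].
  - assert (I := IHHd D0 HP).
    apply (r_Land X Y (Ls ++ G)); [gp I | rewrite H; psolve].
  - psplit HP H.
    + apply (HA X Y G D0 Heq).
      * eapply GWF_perm; [exact Hd1|reflexivity|]. rewrite Hp. reflexivity.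
      * eapply GWF_perm; [exact Hd2|reflexivity|]. rewrite Hp. reflexivity.
    + assert (I1 := IHHd1 (X :: k) ltac:(rewrite Hk2; psolve)).
      assert (I2 := IHHd2 (Y :: k) ltac:(rewrite Hk2; psolve)).
      apply (r_Rand X Y _ (Rs ++ k)); [gp I1 | gp I2 | rewrite Hk1; psolve].
  - assert (I1 := IHHd1 D0 HP). assert (I2 := IHHd2 D0 HP).
    apply (r_Lor X Y (Ls ++ G)); [gp I1 | gp I2 | rewrite H; psolve].
  - psplit HP H.
    + apply (HO X Y G D0 Heq).
      eapply GWF_perm; [exact Hd|reflexivity|]. rewrite Hp. reflexivity.
    + assert (I := IHHd (X :: Y :: k) ltac:(rewrite Hk2; psolve)).
      apply (r_Ror X Y _ (Rs ++ k)); [gp I | rewrite Hk1; psolve].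
  - assert (I1 := IHHd1 (A :: D0) ltac:(rewrite HP; psolve)).
    assert (I2 := IHHd2 D0 HP).
    apply (r_Lmat A B (Ls ++ G)); [auto|auto|gp I1 | gp I2 | rewrite H1; psolve].
  - psplit HP H1.
    + apply (HM A B G D0 Heq).
      eapply GWF_perm; [exact Hd|reflexivity|]. rewrite Hp. reflexivity.
    + assert (I := IHHd (B :: k) ltac:(rewrite Hk2; psolve)).
      apply (r_Rmat A B _ (Rs ++ k)); [auto|auto|gp I | rewrite Hk1; psolve].
  - psplit HP H6; [noprinc|]. wfk Hk2.
    apply (r_LRimp A B C D (Ls ++ G) (Rs ++ k)); auto; [wfs|wfs|rewrite H5; psolve|rewrite Hk1; psolve].
  - psplit HP H3; [noprinc|]. wfk Hk2.
    apply (r_Rimp A B _ (Rs ++ k)); auto; [wfs|wfs|rewrite Hk1; psolve].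
Qed.

Ltac invfin := intros; try discriminate;
  match goal with E : _ = _ |- _ => injection E as <- <- end; simpl; assumption.
Ltac invpre H := let W1 := fresh "W" in let W2 := fresh "W" in
  destruct (GWF_wf _ _ H) as [W1 W2]; wfdes.

Lemma invLand X Y G D : GWF (And X Y :: G) D -> GWF (X::Y::G) D.
Proof. intro H; invpre H. exact (invL (And X Y) [X;Y] [] I ltac:(wfs) ltac:(wfs)
  ltac:(invfin) ltac:(invfin) ltac:(invfin) _ _ H G (Permutation_refl _)). Qed.
Lemma invLor1 X Y G D : GWF (Or X Y :: G) D -> GWF (X::G) D.
Proof. intro H; invpre H. exact (invL (Or X Y) [X] [] I ltac:(wfs) ltac:(wfs)
  ltac:(invfin) ltac:(invfin) ltac:(invfin) _ _ H G (Permutation_refl _)). Qed.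
Lemma invLor2 X Y G D : GWF (Or X Y :: G) D -> GWF (Y::G) D.
Proof. intro H; invpre H. exact (invL (Or X Y) [Y] [] I ltac:(wfs) ltac:(wfs)
  ltac:(invfin) ltac:(invfin) ltac:(invfin) _ _ H G (Permutation_refl _)). Qed.
Lemma invLmat1 A B G D : GWF (Mat A B :: G) D -> GWF G (A::D).
Proof. intro H; invpre H. exact (invL (Mat A B) [] [A] I ltac:(wfs) ltac:(wfs)
  ltac:(invfin) ltac:(invfin) ltac:(invfin) _ _ H G (Permutation_refl _)). Qed.
Lemma invLmat2 A B G D : GWF (Mat A B :: G) D -> GWF (B::G) D.
Proof. intro H; invpre H. exact (invL (Mat A B) [B] [] I ltac:(wfs) ltac:(wfs)
  ltac:(invfin) ltac:(invfin) ltac:(invfin) _ _ H G (Permutation_refl _)). Qed.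
Lemma invRand1 X Y G D : GWF G (And X Y :: D) -> GWF G (X::D).
Proof. intro H; invpre H. exact (invR (And X Y) [] [X] I ltac:(wfs) ltac:(wfs)
  ltac:(invfin) ltac:(invfin) ltac:(invfin) _ _ H D (Permutation_refl _)). Qed.
Lemma invRand2 X Y G D : GWF G (And X Y :: D) -> GWF G (Y::D).
Proof. intro H; invpre H. exact (invR (And X Y) [] [Y] I ltac:(wfs) ltac:(wfs)
  ltac:(invfin) ltac:(invfin) ltac:(invfin) _ _ H D (Permutation_refl _)). Qed.
Lemma invRor X Y G D : GWF G (Or X Y :: D) -> GWF G (X::Y::D).
Proof. intro H; invpre H. exact (invR (Or X Y) [] [X;Y] I ltac:(wfs) ltac:(wfs)
  ltac:(invfin) ltac:(invfin) ltac:(invfin) _ _ H D (Permutation_refl _)). Qed.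
Lemma invRmat A B G D : GWF G (Mat A B :: D) -> GWF (A::G) (B::D).
Proof. intro H; invpre H. exact (invR (Mat A B) [A] [B] I ltac:(wfs) ltac:(wfs)
  ltac:(invfin) ltac:(invfin) ltac:(invfin) _ _ H D (Permutation_refl _)). Qed.

Definition isAI (F : form) : Prop :=
  match F with Atom _ | Imp _ _ => True | _ => False end.

Lemma ev_step (Ev : list form -> Prop) G P k k' :
  (forall G G', (forall x, isAI x -> In x G -> In x G') -> Ev G -> Ev G') ->
  Ev G -> Permutation G (P :: k) -> ~ isAI P -> (forall x, In x k -> In x k') -> Ev k'.
Proof.
  intros Hm HE Hp Hn Hk. apply (Hm G); auto. intros x Hx Hi.
  apply (Permutation_in _ Hp) in Hi. destruct Hi as [<-|Hi]; [contradiction|auto].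
Qed.

Ltac noprinc2 := match goal with Hn : isAI ?F, Heq : ?F = _ |- _ => subst F; simpl in Hn; contradiction end.
Ltac evs Hm HE Hk := eapply (ev_step _ _ _ _ _ Hm HE Hk); [simpl; tauto | simpl; tauto].

Lemma elimL F (Ev : list form -> Prop) : isAI F ->
  (forall G G', (forall x, isAI x -> In x G -> In x G') -> Ev G -> Ev G') ->
  (forall G D0 q, Ev G -> F = Atom q -> wfctx G -> wfctx D0 -> GWF G (Atom q :: D0)) ->
  (forall G Dl0 A B C E, F = Imp C E -> Ev G -> isFrm A = true -> isFrm B = true ->
     isFrm C = true -> isFrm E = true -> wfctx G -> wfctx Dl0 ->
     GWF [Mat C E; A] [B] -> GWF G (Imp A B :: Dl0)) ->
  forall Gr D, GWF Gr D -> forall G, Permutation Gr (F :: G) -> Ev G -> GWF G D.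
Proof.
  intros Hn Hm Hid Himp Gr D1 Hd. induction Hd; intros G0 HP HE.
  - psplit HP H1.
    + eapply GWF_perm; [ apply (Hid G0 D p HE Heq); wfs | reflexivity | symmetry; exact H2].
    + wfk Hk2. apply (r_id p k D); [wfs|wfs|exact Hk1|exact H2].
  - psplit HP H1; [noprinc2|]. wfk Hk2. apply (r_Lbot k D); [wfs|wfs|exact Hk1].
  - psplit HP H; [noprinc2|].
    assert (I := IHHd (X :: Y :: k) ltac:(rewrite Hk2; psolve) ltac:(evs Hm HE Hk1)).
    apply (r_Land X Y k); [exact I | exact Hk1].
  - apply (r_Rand X Y _ D); [apply IHHd1 | apply IHHd2 | exact H]; auto.
  - psplit HP H; [noprinc2|].
    assert (I1 := IHHd1 (X :: k) ltac:(rewrite Hk2; psolve) ltac:(evs Hm HE Hk1)).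
    assert (I2 := IHHd2 (Y :: k) ltac:(rewrite Hk2; psolve) ltac:(evs Hm HE Hk1)).
    apply (r_Lor X Y k); [exact I1 | exact I2 | exact Hk1].
  - apply (r_Ror X Y _ D); [apply IHHd | exact H]; auto.
  - psplit HP H1; [noprinc2|].
    assert (I1 := IHHd1 k Hk2 ltac:(evs Hm HE Hk1)).
    assert (I2 := IHHd2 (B :: k) ltac:(rewrite Hk2; psolve) ltac:(evs Hm HE Hk1)).
    apply (r_Lmat A B k); [auto|auto|exact I1 | exact I2 | exact Hk1].
  - assert (I := IHHd (A :: G0) ltac:(rewrite HP; psolve) ltac:(apply (Hm G0); [simpl; tauto|exact HE])).
    apply (r_Rmat A B _ D); [auto|auto|exact I | exact H1].
  - psplit HP H5.
    + eapply GWF_perm; [ apply (Himp G0 Dl A B C D Heq HE); auto; wfs | reflexivity | symmetry; exact H6].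
    + wfk Hk2. apply (r_LRimp A B C D k Dl); auto.
  - apply (r_Rimp A B G0 D); auto. wfk HP; assumption.
Qed.

Definition isABI (F : form) : Prop :=
  match F with Atom _ | Bot | Imp _ _ => True | _ => False end.
Definition ev A B G := GWF [] [Mat A B] \/ exists C E, isFrm C = true /\ isFrm E = true /\
  In (Imp C E) G /\ GWF [Mat C E] [Mat A B].
Ltac noprinc3 := match goal with Hn : isABI ?F, Heq : ?F = _ |- _ => subst F; simpl in Hn; contradiction end.

Lemma cutLeft F : isABI F ->
  (forall p, F = Atom p -> forall G D, In (Atom p) G -> GWF (F::G) D -> GWF G D) ->
  (forall A B, F = Imp A B -> forall G D, ev A B G -> GWF (F::G) D -> GWF G D) ->
  forall Gl Dl, GWF Gl Dl -> forall G D, Permutation Gl G -> Permutation Dl (F::D) ->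
  GWF (F::G) D -> GWF G D.
Proof.
  intros Hn Hat Himp Gl Dl Hd. induction Hd; intros G1 D1 HG HD HR.
  - psplit HD H2.
    + apply (Hat p Heq G1 D1); auto. eapply Permutation_in; [exact HG|].
      eapply Permutation_in; [symmetry; exact H1| left; reflexivity].
    + wfk Hk2. apply (r_id p G k); [wfs|wfs| rewrite <- HG; exact H1 | exact Hk1].
  - destruct (GWF_wf _ _ HR). apply (r_Lbot G D1); [wfs|wfs| rewrite <- HG; exact H1].
  - assert (R1 : GWF (F :: X :: Y :: G) D1).
    { assert (R0 : GWF (And X Y :: F :: G) D1) by (eapply GWF_perm; [exact HR| rewrite <- HG, H; psolve | reflexivity]).
      apply invLand in R0. gp R0. }
    apply (r_Land X Y G); [ apply (IHHd _ D1 (Permutation_refl _) HD R1) | rewrite <- HG; exact H].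
  - psplit HD H; [noprinc3|].
    assert (R0 : GWF (F :: G1) (And X Y :: k)) by (eapply GWF_perm; [exact HR| reflexivity| exact Hk1]).
    assert (R1 := invRand1 _ _ _ _ R0). assert (R2 := invRand2 _ _ _ _ R0).
    apply (r_Rand X Y G1 k); [ apply (IHHd1 G1 (X :: k)) | apply (IHHd2 G1 (Y :: k)) | exact Hk1];
      auto; rewrite Hk2; psolve.
  - assert (R0 : GWF (Or X Y :: F :: G) D1) by (eapply GWF_perm; [exact HR| rewrite <- HG, H; psolve | reflexivity]).
    assert (R1 := invLor1 _ _ _ _ R0). assert (R2 := invLor2 _ _ _ _ R0).
    apply (r_Lor X Y G); [ apply (IHHd1 _ D1 (Permutation_refl _) HD) | apply (IHHd2 _ D1 (Permutation_refl _) HD)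
      | rewrite <- HG; exact H]; [gp R1 | gp R2].
  - psplit HD H; [noprinc3|].
    assert (R0 : GWF (F :: G1) (Or X Y :: k)) by (eapply GWF_perm; [exact HR| reflexivity| exact Hk1]).
    assert (R1 := invRor _ _ _ _ R0).
    apply (r_Ror X Y G1 k); [ apply (IHHd G1 (X :: Y :: k)) | exact Hk1]; auto; rewrite Hk2; psolve.
  - assert (R0 : GWF (Mat A B :: F :: G) D1) by (eapply GWF_perm; [exact HR| rewrite <- HG, H1; psolve | reflexivity]).
    assert (R1 := invLmat1 _ _ _ _ R0). assert (R2 := invLmat2 _ _ _ _ R0).
    apply (r_Lmat A B G); [auto|auto| apply (IHHd1 G (A :: D1) (Permutation_refl _)) | apply (IHHd2 _ D1 (Permutation_refl _) HD)
      | rewrite <- HG; exact H1]; [rewrite HD; psolve | exact R1 | gp R2].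
  - psplit HD H1; [noprinc3|].
    assert (R0 : GWF (F :: G1) (Mat A B :: k)) by (eapply GWF_perm; [exact HR| reflexivity| exact Hk1]).
    assert (R1 := invRmat _ _ _ _ R0).
    apply (r_Rmat A B G1 k); [auto|auto| apply (IHHd (A :: G1) (B :: k)) | exact Hk1];
      [rewrite HG; reflexivity | rewrite Hk2; psolve | gp R1].
  - psplit HD H6.
    + apply (Himp A B Heq G1 D1); auto. right. exists C, D. repeat split; auto.
      * eapply Permutation_in; [exact HG|]. eapply Permutation_in; [symmetry; exact H5| left; reflexivity].
      * apply (r_Rmat A B [Mat C D] []); auto. gp Hd.
    + wfk Hk2. apply (r_LRimp A B C D G k); auto. rewrite <- HG; exact H5.
  - psplit HD H3.
    + apply (Himp A B Heq G1 D1); auto. left. apply (r_Rmat A B [] []); auto.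
    + wfk Hk2. destruct (GWF_wf _ _ HR) as [W3 _]. apply wf_cons in W3. apply (r_Rimp A B G1 k); try tauto.
Qed.

Fixpoint sz (F : form) : nat :=
  match F with
  | Atom _ | Bot => 1
  | And a b | Or a b | Mat a b => S (sz a + sz b)
  | Imp a b => S (S (sz a + sz b))
  end.
Definition cutP F := forall G D, GWF G (F :: D) -> GWF (F :: G) D -> GWF G D.

From Stdlib Require Import Lia.

Lemma contr_atom p G D : In (Atom p) G -> GWF (Atom p :: G) D -> GWF G D.
Proof.
  intros Hin HR.
  apply (elimL (Atom p) (fun G => In (Atom p) G) I) with (Gr := Atom p :: G) (G := G); auto.
  - intros G1 G2 Hi HE. apply Hi; simpl; auto.
  - intros G0 D0 q Hin' Heq W1 W2. injection Heq as <-. apply in_split in Hin'.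
    destruct Hin' as (l1 & l2 & ->). apply (r_id p (l1 ++ l2) D0); [ | auto | psolve | reflexivity].
    apply Forall_app in W1 as [W3 W4]. apply Forall_cons_iff in W4 as [_ W4]. wfs.
  - intros. discriminate.
Qed.

Lemma cut_all : forall n F, sz F < n -> cutP F.
Proof.
  induction n as [|n IH]; intros F Hs; [lia|].
  assert (IHs : forall F', sz F' < sz F -> cutP F') by (intros; apply IH; lia).
  destruct F as [p| |X Y|X Y|A B|A B]; intros G D H1 H2.
  - apply (cutLeft (Atom p) I) with (Gl := G) (Dl := Atom p :: D); auto.
    + intros q Heq G0 D0 Hin HR. injection Heq as ->. eapply contr_atom; eauto.
    + intros; discriminate.
  - apply (cutLeft Bot I) with (Gl := G) (Dl := Bot :: D); auto; intros; discriminate.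
  - simpl in IHs. destruct (GWF_wf _ _ H1) as [W1 W2]; wfdes.
    assert (R1 := invRand1 _ _ _ _ H1). assert (R2 := invRand2 _ _ _ _ H1).
    assert (R3 := invLand _ _ _ _ H2).
    assert (R4 : GWF (X :: G) D).
    { apply (IHs Y ltac:(lia)).
      - apply (weak _ _ R2 [X] []); wfs.
      - gp R3. }
    apply (IHs X ltac:(lia)); auto.
  - simpl in IHs. destruct (GWF_wf _ _ H1) as [W1 W2]; wfdes.
    assert (R1 := invRor _ _ _ _ H1).
    assert (R2 := invLor1 _ _ _ _ H2). assert (R3 := invLor2 _ _ _ _ H2).
    assert (R4 : GWF G (Y :: D)).
    { apply (IHs X ltac:(lia)); auto.
      assert (R5 := weak _ _ R2 [] [Y] ltac:(wfs) ltac:(wfs)). gp R5. }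
    apply (IHs Y ltac:(lia)); auto.
  - apply (cutLeft (Imp A B) I) with (Gl := G) (Dl := Imp A B :: D); auto.
    + intros; discriminate.
    + intros A0 B0 Heq G0 D0 Hev HR. injection Heq as <- <-.
      destruct (GWF_wf _ _ HR) as [W1 W2]; wfdes.
      apply (elimL (Imp A B) (ev A B) I) with (Gr := Imp A B :: G0) (G := G0); auto.
      * intros G1 G2 Hi [HE|(C & E & c1 & c2 & c3 & c4)]; [left; auto| right].
        exists C, E; repeat split; auto. apply Hi; simpl; auto.
      * intros; discriminate.
      * intros G1 Dl0 A' B' C E Heq HE a1 a2 a3 a4 w1 w2 Hp. injection Heq as <- <-.
        assert (IM : cutP (Mat A B)) by (apply IHs; simpl; lia).
        destruct HE as [HE|(C & E & c1 & c2 & c3 & c4)].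
        -- apply (r_Rimp A' B' G1 Dl0); auto.
           apply (IM [A'] [B']).
           ++ assert (R5 := weak _ _ HE [A'] [B'] ltac:(wfs) ltac:(wfs)). gp R5.
           ++ gp Hp.
        -- apply in_split in c3. destruct c3 as (l1 & l2 & ->).
           assert (w5 : wfctx (l1 ++ l2)) by
             (apply Forall_app in w1 as [w3 w4]; apply Forall_cons_iff in w4 as [_ w4]; wfs).
           assert (P : GWF [Mat C E; A'] [B']).
           { apply (IM [Mat C E; A'] [B']).
             ** assert (R5 := weak _ _ c4 [A'] [B'] ltac:(wfs) ltac:(wfs)). gp R5.
             ** assert (R6 := weak _ _ Hp [Mat C E] [] ltac:(wfs) ltac:(wfs)). gp R6. }
           apply (r_LRimp A' B' C E (l1 ++ l2) Dl0); auto; psolve.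
  - simpl in IHs. destruct (GWF_wf _ _ H1) as [W1 W2]; wfdes.
    assert (R1 := invRmat _ _ _ _ H1).
    assert (R2 := invLmat1 _ _ _ _ H2). assert (R3 := invLmat2 _ _ _ _ H2).
    assert (R4 : GWF G (B :: D)).
    { apply (IHs A ltac:(lia)); auto.
      assert (R5 := weak _ _ R2 [] [B] ltac:(wfs) ltac:(wfs)). gp R5. }
    apply (IHs B ltac:(lia)); auto.
Qed.

Theorem theorem3p6 :
  forall (Dc : form) (G G' D D' : list form),
    isFrm2 Dc = true -> wfctx G -> wfctx G' -> wfctx D -> wfctx D' ->
    GWF G (Dc :: D) -> GWF (Dc :: G') D' ->
    GWF (G ++ G') (D ++ D').
Proof.
  intros Dc G G' D D' HF W1 W2 W3 W4 H1 H2.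
  apply (cut_all (S (sz Dc)) Dc ltac:(lia)).
  - assert (R := weak _ _ H1 G' D' W2 W4). gp R.
  - assert (R := weak _ _ H2 G D W1 W3). gp R.
Qed.
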